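(* Let $S$ be a real skew-symmetric $d\times d$ matrix (not necessarily invertible), let $\mathcal H$ be a Hilbert space on which $\mathrm{CCR}(S)$ with canonical observables $X_1,\dots,X_d$ is represented, let $\psi\in\mathcal H$ be a cyclic unit vector for $\mathrm{CCR}(S)$, put $\psi(\xi):=e^{\sqrt{-1}\xi^iX_i}\psi$ for $\xi\in\mathbb R^d$, and for a bounded operator $A$ on $\mathcal H$ put $\varphi_A(\xi;\eta):=\langle\psi(\xi),A\psi(\eta)\rangle$. Let $D$ be a dense subset of $\mathbb R^d$ and let $\varphi:D\times D\to\mathbb C$ satisfy $0\prec\varphi\prec\varphi_I$ (with $\varphi_I$ restricted to $D\times D$). Then there exists a unique bounded operator $A$ on $\mathcal H$ with $0\le A\le I$ and $\varphi=\varphi_A$ on $D\times D$. Consequently, $\varphi$ extends continuously to $\mathbb R^d\times\mathbb R^d$.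
   Context: $\mathrm{CCR}(S)$ is the von Neumann algebra generated by unitaries $e^{\sqrt{-1}\xi^iX_i}$ satisfying $e^{\sqrt{-1}\xi^iX_i}e^{\sqrt{-1}\eta^jX_j}=e^{\sqrt{-1}\xi^\top S\eta}e^{\sqrt{-1}(\xi+\eta)^iX_i}$ (summation convention). A function $\varphi:D\times D\to\mathbb C$ is positive semidefinite, written $\varphi\succ0$, if for all $r\in\mathbb N$ and $\xi^{(1)},\dots,\xi^{(r)}\in D$ the matrix $[\varphi(\xi^{(i)};\xi^{(j)})]_{i,j}$ is positive semidefinite; $\varphi_1\succ\varphi_2$ means $\varphi_1-\varphi_2\succ0$, and $\varphi_1\prec\varphi_2$ means $\varphi_2\succ\varphi_1$. *)

(* Defs.v *)
From HB Require Import structures.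
From mathcomp Require Import all_boot all_order all_algebra.
From mathcomp Require Import complex.
From mathcomp Require Import reals trigo.
Set Implicit Arguments. Unset Strict Implicit. Unset Printing Implicit Defensive.
Import Order.TTheory GRing.Theory Num.Theory.
Local Open Scope ring_scope.

Section Defs.
Variable R : realType.
Local Notation C := R[i].

Definition expi (t : R) : C := Complex (cos t) (sin t).

Definition sform (d : nat) (S : 'M[R]_d) (xi eta : 'rV[R]_d) : R :=
  (xi *m S *m eta^T) 0 0.

Definition rv_close (d : nat) (xi eta : 'rV[R]_d) (delta : R) : Prop :=
  forall k : 'I_d, `|xi 0 k - eta 0 k| < delta.

Section Hilbert.
Variables (H : lmodType C) (ip : H -> H -> C).

Definition hnorm (x : H) : R := Num.sqrt (complex.Re (ip x x)).

Definition is_hilbert : Prop :=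
  [/\ (forall x y z (a : C), ip x (a *: y + z) = a * ip x y + ip x z),
      (forall x y, ip y x = (ip x y)^*),
      (forall x, 0 <= ip x x),
      (forall x, ip x x = 0 -> x = 0) &
      (forall u : nat -> H,
         (forall e : R, 0 < e -> exists N, forall m n, (N <= m)%N -> (N <= n)%N ->
             hnorm (u m - u n) < e) ->
         exists l : H, forall e : R, 0 < e -> exists N, forall n, (N <= n)%N ->
             hnorm (u n - l) < e)].

Definition linear_op (A : H -> H) : Prop :=
  forall (a : C) x y, A (a *: x + y) = a *: A x + A y.

Definition bounded_op (A : H -> H) : Prop :=
  linear_op A /\ exists M : R, forall x, hnorm (A x) <= M * hnorm x.

Definition op_between_0_I (A : H -> H) : Prop :=
  forall x, 0 <= ip x (A x) /\ ip x (A x) <= ip x x.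

(* a representation of CCR(S): Weyl unitaries W xi = e^{sqrt(-1) xi^i X_i},
   strongly continuous (so that the canonical observables X_i exist) *)
Definition ccr_rep (d : nat) (S : 'M[R]_d) (W : 'rV[R]_d -> H -> H) : Prop :=
  [/\ (forall xi, linear_op (W xi)),
      (forall xi x y, ip (W xi x) (W xi y) = ip x y),
      (forall xi y, exists x, W xi x = y),
      (forall xi eta x, W xi (W eta x) = expi (sform S xi eta) *: W (xi + eta) x) &
      (forall x xi0 (e : R), 0 < e -> exists2 delta : R, 0 < delta &
          forall xi, rv_close xi xi0 delta -> hnorm (W xi x - W xi0 x) < e)].

(* the von Neumann algebra generated by the W xi (double commutant;
   the family {W xi} is closed under adjoints up to scalars) *)
Definition in_vN (d : nat) (W : 'rV[R]_d -> H -> H) (T : H -> H) : Prop :=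
  bounded_op T /\
  forall B, bounded_op B -> (forall xi x, B (W xi x) = W xi (B x)) ->
    forall x, T (B x) = B (T x).

Definition cyclic_vec (d : nat) (W : 'rV[R]_d -> H -> H) (psi : H) : Prop :=
  forall x (e : R), 0 < e -> exists T, in_vN W T /\ hnorm (T psi - x) < e.

Definition phiA (d : nat) (W : 'rV[R]_d -> H -> H) (psi : H) (A : H -> H)
  (xi eta : 'rV[R]_d) : C := ip (W xi psi) (A (W eta psi)).
End Hilbert.

Definition psd_mx (r : nat) (M : 'M[C]_r) : Prop :=
  forall c : 'cV[C]_r, 0 <= ((map_mx Num.conj c)^T *m M *m c) 0 0.

Definition psd_kernel (d : nat) (D : 'rV[R]_d -> Prop)
  (phi : 'rV[R]_d -> 'rV[R]_d -> C) : Prop :=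
  forall (r : nat) (xs : 'I_r -> 'rV[R]_d), (forall k, D (xs k)) ->
    psd_mx (\matrix_(i < r, j < r) phi (xs i) (xs j)).

Definition dense_rv (d : nat) (D : 'rV[R]_d -> Prop) : Prop :=
  forall xi (e : R), 0 < e -> exists eta, D eta /\ rv_close xi eta e.
End Defs.

(* Main.v *)
Require Import Defs.
From HB Require Import structures.
From mathcomp Require Import all_boot all_order all_algebra.
From mathcomp Require Import complex.
From mathcomp Require Import reals trigo.
From mathcomp Require Import classical_sets boolp.
From mathcomp Require Import ring lra.
Import Order.TTheory GRing.Theory Num.Theory.
Set Implicit Arguments. Unset Strict Implicit. Unset Printing Implicit Defensive.
Local Open Scope ring_scope.


Notation Rc := (@complex.Re _).
Notation Ic := (@complex.Im _).

Section CHelp.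
Variable R : realType.
Local Notation C := R[i].
Implicit Types z w : C.
Lemma conjE (z : C) : z^* = (conjc z)%C.
Proof. by []. Qed.
Lemma ReJ (z : C) : Rc (z^*) = Rc z. Proof. by rewrite conjE; case: z. Qed.
Lemma ImJ (z : C) : Ic (z^*) = - Ic z. Proof. by rewrite conjE; case: z. Qed.
Lemma ReD (z w : C) : Rc (z + w) = Rc z + Rc w. Proof. by case: z; case: w. Qed.
Lemma ImD (z w : C) : Ic (z + w) = Ic z + Ic w. Proof. by case: z; case: w. Qed.
Lemma ReM (z w : C) : Rc (z * w) = Rc z * Rc w - Ic z * Ic w.
Proof. by case: z; case: w. Qed.
Lemma ImM (z w : C) : Ic (z * w) = Rc z * Ic w + Ic z * Rc w.
Proof. case: z => a b; case: w => c e /=. ring. Qed.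
Lemma ReN (z : C) : Rc (- z) = - Rc z. Proof. by case: z. Qed.
Lemma ImN (z : C) : Ic (- z) = - Ic z. Proof. by case: z. Qed.
Lemma ReB (z w : C) : Rc (z - w) = Rc z - Rc w. Proof. by rewrite ReD ReN. Qed.
Lemma ImB (z w : C) : Ic (z - w) = Ic z - Ic w. Proof. by rewrite ImD ImN. Qed.
Lemma Rec (r : R) : Rc (r%:C)%C = r. Proof. by []. Qed.
Lemma Imc (r : R) : Ic (r%:C)%C = 0. Proof. by []. Qed.
Lemma Re0 : Rc (0 : C) = 0. Proof. by []. Qed.
Lemma Im0 : Ic (0 : C) = 0. Proof. by []. Qed.
Lemma Re1 : Rc (1 : C) = 1. Proof. by []. Qed.
Lemma Im1 : Ic (1 : C) = 0. Proof. by []. Qed.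
Lemma cE (z : C) : z = Complex (Rc z) (Ic z). Proof. by case: z. Qed.
Lemma ceq (z w : C) : Rc z = Rc w -> Ic z = Ic w -> z = w.
Proof. by case: z => a b; case: w => c e /= -> ->. Qed.
Lemma le0c (z : C) : (0 <= z) = (Ic z == 0) && (0 <= Rc z).
Proof. by rewrite lecE eq_sym. Qed.
Lemma lec' (z w : C) : (z <= w) = (Ic z == Ic w) && (Rc z <= Rc w).
Proof. by rewrite lecE eq_sym. Qed.
Lemma ltc' (z w : C) : (z < w) = (Ic z == Ic w) && (Rc z < Rc w).
Proof. by rewrite ltcE eq_sym. Qed.
Definition nc (z : C) : R := Num.sqrt (Rc z ^+ 2 + Ic z ^+ 2).
Lemma nc_ge0 z : 0 <= nc z. Proof. exact: sqrtr_ge0. Qed.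
Lemma nc2 z : nc z ^+ 2 = Rc z ^+ 2 + Ic z ^+ 2.
Proof. by rewrite sqr_sqrtr // addr_ge0 // sqr_ge0. Qed.
Lemma normC' (z : C) : `|z| = (nc z)%:C%C. Proof. by rewrite normc_def. Qed.
Lemma sqrt_le (a b : R) : 0 <= b -> a ^+ 2 <= b ^+ 2 -> a <= b.
Proof. move=> hb h; case: (lerP a b) => // hab; nra. Qed.
Lemma sqrt_le' (a b : R) : 0 <= a -> 0 <= b -> a <= b -> a ^+ 2 <= b ^+ 2.
Proof. move=> ha hb h; nra. Qed.
Lemma nc_le (z : C) (b : R) : 0 <= b -> Rc z ^+ 2 + Ic z ^+ 2 <= b ^+ 2 -> nc z <= b.
Proof. by move=> hb h; apply: sqrt_le => //; rewrite nc2. Qed.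
Lemma nc_ler (z : C) (b : R) : nc z <= b -> Rc z ^+ 2 + Ic z ^+ 2 <= b ^+ 2.
Proof. move=> h; rewrite -nc2; apply: sqrt_le' => //; [exact: nc_ge0| exact: le_trans (nc_ge0 _) h]. Qed.
Lemma Re_le_nc z : `|Rc z| <= nc z.
Proof. apply: sqrt_le; first exact: nc_ge0. rewrite nc2 (real_normK (num_real _)); have := sqr_ge0 (Ic z); lra. Qed.
Lemma Im_le_nc z : `|Ic z| <= nc z.
Proof. apply: sqrt_le; first exact: nc_ge0. rewrite nc2 (real_normK (num_real _)); have := sqr_ge0 (Rc z); lra. Qed.
Lemma Re_le_nc' z : Rc z <= nc z.
Proof. exact: le_trans (ler_norm _) (Re_le_nc z). Qed.
Lemma ncM z w : nc (z * w) = nc z * nc w.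
Proof.
apply/eqP; rewrite eq_le; apply/andP; split.
  apply: nc_le; first by rewrite mulr_ge0 ?nc_ge0.
  by rewrite exprMn !nc2 ReM ImM; nra.
apply: sqrt_le; first exact: nc_ge0.
by rewrite exprMn !nc2 ReM ImM; nra.
Qed.
Lemma ncJ z : nc (z^*) = nc z.
Proof. by rewrite /nc ReJ ImJ sqrrN. Qed.
Lemma ncN z : nc (- z) = nc z.
Proof. by rewrite /nc ReN ImN !sqrrN. Qed.
Lemma ncD z w : nc (z + w) <= nc z + nc w.
Proof.
apply: nc_le; first by rewrite addr_ge0 ?nc_ge0.
rewrite ReD ImD; have h1 := nc2 z; have h2 := nc2 w.
have h : Rc z * Rc w + Ic z * Ic w <= nc z * nc w.
  apply: sqrt_le; first by rewrite mulr_ge0 ?nc_ge0.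
  rewrite exprMn !nc2; have := sqr_ge0 (Rc z * Ic w - Ic z * Rc w); nra.
nra.
Qed.
Lemma ncB z w : nc (z - w) = nc (w - z).
Proof. by rewrite -ncN opprB. Qed.
Lemma ncc r : nc (r%:C)%C = `|r|.
Proof. by rewrite /nc /= expr0n /= addr0 sqrtr_sqr. Qed.
Lemma nc0 : nc 0 = 0. Proof. by rewrite -[0]/((0:R)%:C)%C ncc normr0. Qed.
Lemma nc_eq0 z : nc z = 0 -> z = 0.
Proof.
move=> h; have := nc2 z; rewrite h expr0n /= => h2.
have h3 : Rc z = 0 by nra.
have h4 : Ic z = 0 by nra.
by apply: ceq.
Qed.
Lemma RecJ z : Rc (z^* * z) = nc z ^+ 2.
Proof. by rewrite ReM ReJ ImJ nc2; ring. Qed.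
Lemma IcJ z : Ic (z^* * z) = 0.
Proof. by rewrite ImM ReJ ImJ; ring. Qed.
Lemma JM z : z^* * z = (nc z ^+ 2)%:C%C.
Proof. by apply: ceq; rewrite ?RecJ ?IcJ. Qed.
Lemma ReMc r z : Rc ((r%:C)%C * z) = r * Rc z.
Proof. by rewrite ReM /=; ring. Qed.
Lemma ImMc r z : Ic ((r%:C)%C * z) = r * Ic z.
Proof. by rewrite ImM /=; ring. Qed.
Lemma ReJM z w : Rc (z^* * w) = Rc (z * w^*).
Proof. by rewrite !ReM !ReJ !ImJ; ring. Qed.
Lemma tau_lem (r : R) z w : Rc ((- (r%:C)%C * z^*) * (z + w)) = - r * (nc z ^+ 2 + Rc (z^* * w)).
Proof. rewrite nc2 !ReM ?ImM ?ReD ?ImD ?ReN ?ImN ?ReM ?ImM ?ReJ ?ImJ /=; ring. Qed.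
Lemma conjc_real' r : ((r%:C)%C : C)^* = (r%:C)%C.
Proof. by apply: ceq; rewrite ?ReJ ?ImJ //= oppr0. Qed.

Lemma eqleW (a b : R) : a = b -> a <= b.
Proof. by move=> ->. Qed.
Lemma eps_le (a c : R) : (forall e, 0 < e -> a <= e * c) -> a <= 0.
Proof.
move=> h; case: (lerP a 0) => // ha.
case: (lerP c 0) => hc.
  by have := h 1 ltr01; rewrite mul1r => h1; lra.
have := h (a / (2 * c)); rewrite divr_gt0 ?mulr_gt0 // => /(_ isT).
have -> : a / (2 * c) * c = a / 2.
  by field; rewrite gt_eqF.
move=> h2; lra.
Qed.
Lemma eps_le' (a b c : R) : (forall e, 0 < e -> a <= b + e * c) -> a <= b.
Proof. move=> h; rewrite -subr_le0; apply: (@eps_le _ c) => e /h; lra. Qed.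

Lemma quad (a b c : R) : 0 <= a -> 0 <= b ->
  (forall t, 0 <= a * t ^+ 2 - 2 * b * t + c) -> b ^+ 2 <= a * c.
Proof.
move=> ha hb h.
case: (ltrP 0 a) => ha0.
  have := h (b / a).
  have e1 : a * (b / a) ^+ 2 = b ^+ 2 / a by field; rewrite gt_eqF.
  have e2 : 2 * b * (b / a) = 2 * (b ^+ 2 / a) by rewrite expr2; field; rewrite gt_eqF.
  rewrite e1 e2 => h1.
  have : b ^+ 2 / a <= c by lra.
  by rewrite ler_pdivrMr // mulrC.
have a0 : a = 0 by apply/eqP; rewrite eq_le ha0 ha.
rewrite a0 mul0r.
case: (ltrP 0 b) => hb0; last first.
  have -> : b = 0 by apply/eqP; rewrite eq_le hb hb0.
  by rewrite expr0n.
have := h ((c + 1) / (2 * b)); rewrite a0 mul0r sub0r.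
have -> : 2 * b * ((c + 1) / (2 * b)) = c + 1.
  by rewrite mulrC -mulrA mulVf ?mulr1 // mulf_neq0 // gt_eqF.
lra.
Qed.
End CHelp.

Section Form.
Variable R : realType.
Local Notation C := R[i].
Variables (L : Type) (add : L -> L -> L) (scl : C -> L -> L) (q : L -> L -> C).
Hypothesis qDl : forall s t u, q (add s t) u = q s u + q t u.
Hypothesis qDr : forall s t u, q s (add t u) = q s t + q s u.
Hypothesis qZl : forall c s t, q (scl c s) t = c^* * q s t.
Hypothesis qZr : forall c s t, q s (scl c t) = c * q s t.
Hypothesis qpos : forall s, 0 <= q s s.

Lemma q_real s : Ic (q s s) = 0.
Proof. by have := qpos s; rewrite le0c => /andP[/eqP]. Qed.

Lemma q_herm s t : q t s = (q s t)^*.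
Proof.
have h1 := q_real (add s t).
have h2 := q_real (add s (scl 'i%C t)).
rewrite !qDl !qDr in h1. rewrite !qDl !qDr !qZl !qZr in h2.
rewrite !ImD q_real (q_real t) in h1.
have ei : ('i%C : C)^* = - 'i%C by apply: ceq; rewrite ?ReJ ?ImJ /= ?oppr0.
rewrite ei !ImD !ImM ?ReM q_real (q_real t) ?ImN /= in h2.
apply: ceq; rewrite ?ReJ ?ImJ; lra.
Qed.

Lemma q_expand s t (c : C) :
  Rc (q (add s (scl c t)) (add s (scl c t))) =
  Rc (q s s) + 2 * Rc (c * q s t) + nc c ^+ 2 * Rc (q t t).
Proof.
rewrite !qDl !qDr !qZl !qZr (q_herm t s) !ReD !ReM ?ReJ ?ImJ ?ImM ?ReJ ?ImJ.
rewrite (q_real t) nc2; ring.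
Qed.

Lemma q_CS s t : nc (q s t) ^+ 2 <= Rc (q s s) * Rc (q t t).
Proof.
set w := q s t.
have hss : 0 <= Rc (q s s) by have := qpos s; rewrite le0c => /andP[].
have htt : 0 <= Rc (q t t) by have := qpos t; rewrite le0c => /andP[].
case: (eqVneq (nc w) 0) => hw; first by rewrite hw expr0n /= mulr_ge0.
have key : forall r : R, 0 <= (nc w ^+ 2 * Rc (q t t)) * r ^+ 2 - 2 * nc w ^+ 2 * r + Rc (q s s).
  move=> r; have := qpos (add s (scl (- (r%:C)%C * w^*) t)).
  rewrite le0c => /andP[_]; rewrite q_expand.
  rewrite ncM ncN ncc ncJ exprMn (real_normK (num_real _)).
  have -> : Rc (- (r%:C)%C * w^* * w) = - r * nc w ^+ 2.
    by rewrite -mulrA JM mulNr ReN ReMc /= mulNr.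
  move=> h; lra.
have := quad (mulr_ge0 (sqr_ge0 (nc w)) htt) (sqr_ge0 (nc w)) key.
have hw2 : 0 < nc w ^+ 2 by rewrite exprn_gt0 // lt_def hw nc_ge0.
move=> h; nra.
Qed.
End Form.


Section IP.
Variable R : realType.
Local Notation C := R[i].
Variables (H : lmodType C) (ip : H -> H -> C).
Hypothesis ipl : forall x y z (a : C), ip x (a *: y + z) = a * ip x y + ip x z.
Hypothesis ipc : forall x y, ip y x = (ip x y)^*.
Hypothesis ipp : forall x, 0 <= ip x x.
Hypothesis ipd : forall x, ip x x = 0 -> x = 0.

Local Notation nrm := (hnorm ip).

Lemma ipDr x y z : ip x (y + z) = ip x y + ip x z.
Proof. by have := ipl x y z 1; rewrite scale1r mul1r. Qed.
Lemma ip0r x : ip x 0 = 0.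
Proof.
have := ipDr x 0 0; rewrite addr0 => /(congr1 (fun z => z - ip x 0)).
by rewrite subrr addrK.
Qed.
Lemma ipZr x y a : ip x (a *: y) = a * ip x y.
Proof. by have := ipl x y 0 a; rewrite !addr0 ip0r addr0. Qed.
Lemma ipNr x y : ip x (- y) = - ip x y.
Proof. by rewrite -scaleN1r ipZr mulN1r. Qed.
Lemma ipBr x y z : ip x (y - z) = ip x y - ip x z.
Proof. by rewrite ipDr ipNr. Qed.
Lemma ipDl x y z : ip (x + y) z = ip x z + ip y z.
Proof. by rewrite ipc ipDr rmorphD (ipc z x) (ipc z y). Qed.
Lemma ipZl x y a : ip (a *: x) y = a^* * ip x y.
Proof. by rewrite ipc ipZr rmorphM (ipc y x). Qed.
Lemma ip0l x : ip 0 x = 0.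
Proof. by rewrite ipc ip0r rmorph0. Qed.
Lemma ipNl x y : ip (- x) y = - ip x y.
Proof. by rewrite ipc ipNr rmorphN (ipc y x). Qed.
Lemma ipBl x y z : ip (x - y) z = ip x z - ip y z.
Proof. by rewrite ipDl ipNl. Qed.
Lemma ip_sumr (I : Type) (s : seq I) (F : I -> H) x :
  ip x (\sum_(i <- s) F i) = \sum_(i <- s) ip x (F i).
Proof. elim: s => [|a s IH]; first by rewrite !big_nil ip0r. by rewrite !big_cons ipDr IH. Qed.
Lemma ip_suml (I : Type) (s : seq I) (F : I -> H) x :
  ip (\sum_(i <- s) F i) x = \sum_(i <- s) ip (F i) x.
Proof. elim: s => [|a s IH]; first by rewrite !big_nil ip0l. by rewrite !big_cons ipDl IH. Qed.

Lemma ip_real x : Ic (ip x x) = 0.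
Proof. by have := ipp x; rewrite le0c => /andP[/eqP]. Qed.
Lemma ip_Re_ge0 x : 0 <= Rc (ip x x).
Proof. by have := ipp x; rewrite le0c => /andP[]. Qed.
Lemma nrm_ge0 x : 0 <= nrm x. Proof. exact: sqrtr_ge0. Qed.
Lemma nrm2 x : nrm x ^+ 2 = Rc (ip x x).
Proof. by rewrite /hnorm sqr_sqrtr // ip_Re_ge0. Qed.
Lemma ipxx x : ip x x = (nrm x ^+ 2)%:C%C.
Proof. by apply: ceq; rewrite nrm2 //= ip_real. Qed.
Lemma nrm0 : nrm 0 = 0.
Proof. by rewrite /hnorm ip0r sqrtr0. Qed.
Lemma nrm_eq0 x : nrm x = 0 -> x = 0.
Proof. by move=> h; apply: ipd; rewrite ipxx h expr0n. Qed.

Lemma ReipC x y : Rc (ip y x) = Rc (ip x y).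
Proof. by rewrite ipc ReJ. Qed.

Lemma sq_eq (a b : R) : 0 <= a -> 0 <= b -> a ^+ 2 = b ^+ 2 -> a = b.
Proof. move=> ha hb h; apply/eqP; rewrite eq_le; apply/andP; split; nra. Qed.

Lemma ip_CS x y : nc (ip x y) <= nrm x * nrm y.
Proof.
have := @q_CS R H +%R *:%R ip ipDl ipDr (fun c s t => ipZl s t c) (fun c s t => ipZr s t c) ipp x y.
rewrite -!nrm2 => h; apply: sqrt_le; first by rewrite mulr_ge0 ?nrm_ge0.
by rewrite exprMn.
Qed.

Lemma nrm2D x y : nrm (x + y) ^+ 2 = nrm x ^+ 2 + 2 * Rc (ip x y) + nrm y ^+ 2.
Proof. by rewrite !nrm2 ipDl !ipDr !ReD (ReipC x y); ring. Qed.
Lemma nrmZ a x : nrm (a *: x) = nc a * nrm x.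
Proof.
apply: sq_eq; rewrite ?mulr_ge0 ?nrm_ge0 ?nc_ge0 //.
by rewrite nrm2 ipZl ipZr mulrA JM ReMc exprMn nrm2.
Qed.
Lemma nrmN x : nrm (- x) = nrm x.
Proof.
have h : nc (-1 : C) = 1 by rewrite ncN /nc Re1 Im1 expr1n expr0n addr0 sqrtr1.
by rewrite -scaleN1r nrmZ h mul1r.
Qed.
Lemma nrmB x y : nrm (x - y) = nrm (y - x).
Proof. by rewrite -nrmN opprB. Qed.
Lemma nrmD x y : nrm (x + y) <= nrm x + nrm y.
Proof.
apply: sqrt_le; first by rewrite addr_ge0 ?nrm_ge0.
rewrite nrm2D; have := Re_le_nc' (ip x y); have := ip_CS x y; nra.
Qed.
Lemma nrm_tri x y z : nrm (x - z) <= nrm (x - y) + nrm (y - z).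
Proof. by have := nrmD (x - y) (y - z); rewrite addrA subrK. Qed.
Lemma nrm_ge_diff x y : nrm x <= nrm y + nrm (x - y).
Proof. by have := nrmD y (x - y); rewrite addrC subrK addrC. Qed.

Hypothesis ipcomp : forall u : nat -> H,
  (forall e : R, 0 < e -> exists N, forall m n, (N <= m)%N -> (N <= n)%N ->
     nrm (u m - u n) < e) ->
  exists l : H, forall e : R, 0 < e -> exists N, forall n, (N <= n)%N ->
     nrm (u n - l) < e.

Lemma archi_inv (e : R) : 0 < e -> exists N : nat, forall n, (N <= n)%N -> (n.+1%:R)^-1 < e.
Proof.
move=> he; exists (Num.Def.archi_bound (e^-1)) => n hn.
have hi : 0 <= e^-1 by rewrite invr_ge0 ltW.
have h1 := archi_boundP hi.
have h2 : (Num.Def.archi_bound e^-1)%:R <= (n.+1)%:R :> R.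
  by rewrite ler_nat; apply: leq_trans hn _.
rewrite -[e]invrK ltf_pV2 ?posrE ?invr_gt0 ?ltr0Sn //.
exact: lt_le_trans h1 h2.
Qed.

Section Dirichlet.
Variables (L : Type) (s0 : L) (vec : L -> H) (add : L -> L -> L) (scl : C -> L -> L)
  (l : L -> C) (K : R).
Hypothesis vecD : forall s t, vec (add s t) = vec s + vec t.
Hypothesis vecZ : forall c s, vec (scl c s) = c *: vec s.
Hypothesis lD : forall s t, l (add s t) = l s + l t.
Hypothesis lZ : forall c s, l (scl c s) = c^* * l s.
Hypothesis lB : forall s, nc (l s) <= K * nrm (vec s).

Let J s := nrm (vec s) ^+ 2 - 2 * Rc (l s).

Lemma J_lb s : - K ^+ 2 <= J s.
Proof.
rewrite /J; have := lB s; have := Re_le_nc' (l s); have := nrm_ge0 (vec s).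
have := sqr_ge0 (nrm (vec s) - K); nra.
Qed.

Lemma J_par s t : J s + J t =
  2 * J (scl ((2^-1 : R)%:C)%C (add s t)) + 2^-1 * nrm (vec s - vec t) ^+ 2.
Proof.
rewrite /J vecZ vecD nrmZ lZ lD conjc_real' ReMc ReD ncc exprMn.
rewrite (nrm2D (vec s) (vec t)) (nrm2D (vec s) (- vec t)) nrmN ipNr ReN.
rewrite ger0_norm ?invr_ge0 ?ler0n //.
set a := nrm (vec s) ^+ 2; set b := nrm (vec t) ^+ 2.
set c := Rc (ip (vec s) (vec t)); set d := Rc (l s); set f := Rc (l t).
by rewrite expr2; field.
Qed.

Let E : set R := fun r => exists s, r = J s.
Let m := inf E.
Lemma E_inf : has_inf E.
Proof.
split; first by exists (J s0); exists s0.
by exists (- K ^+ 2) => r [s ->]; apply: J_lb.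
Qed.
Lemma J_m s : m <= J s.
Proof. by have := ge_inf (proj2 E_inf); apply; exists s. Qed.

Lemma dirichlet : exists y, (forall e, 0 < e -> exists s, nrm (y - vec s) < e) /\
  forall s, ip (vec s) y = l s.
Proof.
have hex : forall n : nat, exists s, J s < m + (n.+1%:R)^-1.
  move=> n; have hp : 0 < (n.+1%:R : R)^-1 by rewrite invr_gt0 ltr0Sn.
  have [r [s ->] hr] := inf_adherent hp E_inf.
  by exists s.
pose sq n := proj1_sig (cid (hex n)).
have sqP : forall n, J (sq n) < m + (n.+1%:R)^-1 := fun n => proj2_sig (cid (hex n)).
have cauchy : forall n k, nrm (vec (sq n) - vec (sq k)) ^+ 2 <
    2 * (n.+1%:R)^-1 + 2 * (k.+1%:R)^-1.
  move=> n k; have := J_par (sq n) (sq k).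
  have := J_m (scl ((2^-1 : R)%:C)%C (add (sq n) (sq k))).
  have := sqP n; have := sqP k. move=> h1 h2 h3 h4.
  move: h1 h2 h3 h4; set a := J (sq k); set b := J (sq n); set c := J _; set d := nrm _ ^+ 2.
  move: a b c d (m) => a b c d mm. move: (n.+1%:R^-1 : R) (k.+1%:R^-1 : R) => u v; lra.
have [y hy] : exists y, forall e, 0 < e -> exists N, forall n, (N <= n)%N ->
    nrm (vec (sq n) - y) < e.
  apply: ipcomp => e he.
  have he2 : 0 < e ^+ 2 / 4 by rewrite divr_gt0 ?exprn_gt0.
  have [N hN] := archi_inv he2.
  exists N => a b ha hb.
  have c1 := cauchy a b; have c2 := hN a ha; have c3 := hN b hb.
  have hn := nrm_ge0 (vec (sq a) - vec (sq b)).
  move: c1 c2 c3 hn; move: (nrm _) (a.+1%:R^-1 : R) (b.+1%:R^-1 : R) => z u v c1 c2 c3 hn.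
  have : z ^+ 2 < e ^+ 2 by lra.
  move=> h; nra.
exists y; split.
  move=> e he; have [N hN] := hy e he; exists (sq N).
  by rewrite nrmB; apply: hN.
move=> s.
set v := vec s.
set w := ip y v - (l s)^*.
suff w0 : w = 0.
  by rewrite ipc; move/eqP: w0; rewrite subr_eq0 => /eqP ->; rewrite conjCK.
set r := (nrm v ^+ 2 + 1)^-1.
have hr : 0 < r by rewrite invr_gt0 ltr_wpDl ?sqr_ge0 ?ltr01.
have hrv : r * nrm v ^+ 2 <= 1.
  rewrite /r mulrC ler_pdivrMr ?mul1r ?ltr_wpDl ?sqr_ge0 ?ltr01 //.
  by rewrite lerDl ler01.
set tau := - (r%:C)%C * w^*.
have key : forall n, r * nc w ^+ 2 <
    (n.+1%:R)^-1 + 2 * r * nc w * nrm v * nrm (vec (sq n) - y).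
  move=> n.
  have h1 := J_m (add (sq n) (scl tau s)).
  have h2 := sqP n.
  rewrite /J vecD vecZ lD lZ nrm2D nrmZ ipZr ReD in h1.
  have e1 : Rc ((tau^*) * l s) = Rc (tau * (l s)^*).
    exact: ReJM.
  rewrite e1 in h1.
  have e2 : Rc (tau * ip (vec (sq n)) v) - Rc (tau * (l s)^*) =
      - r * (nc w ^+ 2 + Rc (w^* * ip (vec (sq n) - y) v)).
    rewrite -ReB -mulrBr.
    have -> : ip (vec (sq n)) v - (l s)^* = w + ip (vec (sq n) - y) v.
      by rewrite /w ipBl; ring.
    exact: tau_lem.
  have e3 : nc tau = r * nc w.
    by rewrite /tau ncM ncN ncc ncJ ger0_norm // ltW.
  rewrite e3 in h1.
  rewrite /J in h2.
  have e4 : `|Rc (w^* * ip (vec (sq n) - y) v)| <= nc w * (nrm (vec (sq n) - y) * nrm v).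
    apply: le_trans (Re_le_nc _) _; rewrite ncM ncJ ler_wpM2l ?nc_ge0 //.
    exact: ip_CS.
  move: e4; rewrite ler_norml => /andP[e4 e5].
  have e6 : 0 <= nc w ^+ 2 by exact: sqr_ge0.
  move: h1 h2 e2 e4 e5 hrv hr e6.
  move: (Rc (tau * ip (vec (sq n)) v)) (Rc (tau * (l s)^*)) (Rc (w^* * ip (vec (sq n) - y) v)).
  move: (nc w) (nrm v) (nrm (vec (sq n) - y)) (nrm (vec (sq n))) ((n.+1)%:R^-1 : R) (Rc (l (sq n))) (m).
  move=> W V D X U Ln mm A B Z h1 h2 e2 e4 e5 hrv' hr' e6.
  have f1 : (r * W * V) ^+ 2 <= r * W ^+ 2.
    have : r * W ^+ 2 * (r * V ^+ 2) <= r * W ^+ 2 * 1.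
      by apply: ler_wpM2l => //; rewrite mulr_ge0 // ltW.
    by rewrite mulr1 => h; apply: le_trans h; apply: eqleW; ring.
  have f2 : - (r * (W * (D * V))) <= r * Z.
    by rewrite -mulrN; apply: ler_wpM2l => //; exact: ltW.
  have f3 : r * (W ^+ 2 + Z) = r * W ^+ 2 + r * Z by ring.
  lra.
have hW : r * nc w ^+ 2 <= 0.
  apply: (@eps_le _ _ (1 + 2 * r * nc w * nrm v)) => e he.
  have [N1 hN1] := hy e he.
  have [N2 hN2] := archi_inv he.
  have k := key (maxn N1 N2).
  have k1 := hN1 (maxn N1 N2) (leq_maxl _ _).
  have k2 := hN2 (maxn N1 N2) (leq_maxr _ _).
  have k3 : 0 <= 2 * r * nc w * nrm v by rewrite !mulr_ge0 ?nc_ge0 ?nrm_ge0 // ltW.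
  have k4 : 2 * r * nc w * nrm v * nrm (vec (sq (maxn N1 N2)) - y) <= 2 * r * nc w * nrm v * e.
    by apply: ler_wpM2l => //; exact: ltW.
  move: k k2 k4; move: ((maxn N1 N2).+1%:R^-1 : R) => U; lra.
apply: nc_eq0.
have : nc w ^+ 2 <= 0 by rewrite -(pmulr_rle0 _ hr).
have := nc_ge0 w; nra.
Qed.
End Dirichlet.
End IP.


Section Main.
Variable R : realType.
Local Notation C := R[i].
Variables (d : nat) (S : 'M[R]_d).
Variables (H : lmodType C) (ip : H -> H -> C).
Variables (W : 'rV[R]_d -> H -> H) (psi : H) (D : 'rV[R]_d -> Prop).
Hypothesis hS : S^T = - S.
Hypothesis ipl : forall x y z (a : C), ip x (a *: y + z) = a * ip x y + ip x z.
Hypothesis ipc : forall x y, ip y x = (ip x y)^*.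
Hypothesis ipp : forall x, 0 <= ip x x.
Hypothesis ipd : forall x, ip x x = 0 -> x = 0.
Local Notation nrm := (hnorm ip).
Hypothesis ipcomp : forall u : nat -> H,
  (forall e : R, 0 < e -> exists N, forall m n, (N <= m)%N -> (N <= n)%N ->
     nrm (u m - u n) < e) ->
  exists l : H, forall e : R, 0 < e -> exists N, forall n, (N <= n)%N ->
     nrm (u n - l) < e.
Hypothesis Wlin : forall xi, linear_op (W xi).
Hypothesis Wip : forall xi x y, ip (W xi x) (W xi y) = ip x y.
Hypothesis Wsurj : forall xi y, exists x, W xi x = y.
Hypothesis Wmul : forall xi eta x, W xi (W eta x) = expi (sform S xi eta) *: W (xi + eta) x.
Hypothesis Wcont : forall x xi0 (e : R), 0 < e -> exists2 delta : R, 0 < delta &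
          forall xi, rv_close xi xi0 delta -> nrm (W xi x - W xi0 x) < e.
Hypothesis hpsi : nrm psi = 1.
Hypothesis hcyc : cyclic_vec ip W psi.
Hypothesis hD : dense_rv D.

Local Notation ipDr := (ipDr ipl).
Local Notation ipZr := (ipZr ipl).
Local Notation ipNr := (ipNr ipl).
Local Notation ipBr := (ipBr ipl).
Local Notation ip0r := (ip0r ipl).
Local Notation ipDl := (ipDl ipl ipc).
Local Notation ipZl := (ipZl ipl ipc).
Local Notation ipNl := (ipNl ipl ipc).
Local Notation ipBl := (ipBl ipl ipc).
Local Notation ip0l := (ip0l ipl ipc).
Local Notation ip_CS := (ip_CS ipl ipc ipp).
Local Notation nrmD := (nrmD ipl ipc ipp).
Local Notation nrmZ := (nrmZ ipl ipc ipp).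
Local Notation nrmN := (nrmN ipl ipc ipp).
Local Notation nrmB := (nrmB ipl ipc ipp).
Local Notation nrm_ge0 := (nrm_ge0 ip).
Local Notation nrm2 := (nrm2 ipp).
Local Notation nrm0 := (nrm0 ipl).
Local Notation nrm_tri := (nrm_tri ipl ipc ipp).
Local Notation ipxx := (ipxx ipp).
Local Notation ip_sumr := (ip_sumr ipl).
Local Notation ip_suml := (ip_suml ipl ipc).

Lemma WD xi x y : W xi (x + y) = W xi x + W xi y.
Proof. by have := Wlin xi 1 x y; rewrite !scale1r. Qed.
Lemma W0 xi : W xi 0 = 0.
Proof.
have := WD xi 0 0; rewrite addr0 => /(congr1 (fun z => z - W xi 0)).
by rewrite subrr addrK.
Qed.
Lemma WZ xi a x : W xi (a *: x) = a *: W xi x.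
Proof. by have := Wlin xi a x 0; rewrite !addr0 W0 addr0. Qed.
Lemma WN xi x : W xi (- x) = - W xi x.
Proof. by rewrite -scaleN1r WZ scaleN1r. Qed.
Lemma WB xi x y : W xi (x - y) = W xi x - W xi y.
Proof. by rewrite WD WN. Qed.
Lemma W_sum xi (I : Type) (s : seq I) (F : I -> H) :
  W xi (\sum_(i <- s) F i) = \sum_(i <- s) W xi (F i).
Proof. elim: s => [|a s IH]; first by rewrite !big_nil W0. by rewrite !big_cons WD IH. Qed.
Lemma nrmW xi x : nrm (W xi x) = nrm x.
Proof. by rewrite /hnorm Wip. Qed.

Lemma sform_self xi : sform S xi xi = 0.
Proof.
rewrite /sform.
have h : (xi *m S *m xi^T)^T = - (xi *m S *m xi^T).
  by rewrite !trmx_mul trmxK hS mulNmx mulmxN mulmxA.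
move: h; set M := xi *m S *m xi^T => h.
have := congr1 (fun M : 'M[R]_1 => M 0 0) h; rewrite /= !mxE => h2.
lra.
Qed.
Lemma sform_N xi eta : sform S (- xi) eta = - sform S xi eta.
Proof. by rewrite /sform mulNmx mulNmx mxE. Qed.
Lemma sform_0 eta : sform S 0 eta = 0.
Proof. by rewrite /sform !mul0mx mxE. Qed.
Lemma expi0 : expi 0 = 1 :> C.
Proof. by rewrite /expi cos0 sin0. Qed.

Lemma W0id x : W 0 x = x.
Proof.
have [y <-] := Wsurj 0 x.
by rewrite Wmul sform_0 expi0 scale1r addr0.
Qed.
Lemma WNK xi x : W (- xi) (W xi x) = x.
Proof. by rewrite Wmul sform_N sform_self oppr0 expi0 scale1r addNr W0id. Qed.
Lemma WKN xi x : W xi (W (- xi) x) = x.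
Proof. by have := WNK (- xi) x; rewrite opprK. Qed.
Lemma W_adj xi x y : ip x (W xi y) = ip (W (- xi) x) y.
Proof. by rewrite -(Wip (- xi)) WNK. Qed.

Definition Dt := {xi : 'rV[R]_d | D xi}.
Definition L := seq (C * Dt).
Definition vec (s : L) : H := \sum_(p <- s) p.1 *: W (sval p.2) psi.
Definition scl (c : C) (s : L) : L := map (fun p => (c * p.1, p.2)) s.
Lemma vecD s t : vec (s ++ t) = vec s + vec t.
Proof. by rewrite /vec big_cat. Qed.
Lemma vecZ c s : vec (scl c s) = c *: vec s.
Proof.
rewrite /vec big_map scaler_sumr; apply: eq_bigr => p _.
by rewrite scalerA.
Qed.
Lemma vec1 xi (h : D xi) : vec [:: (1, exist _ xi h)] = W xi psi.
Proof. by rewrite /vec big_seq1 /= scale1r. Qed.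
Lemma vec0 : vec [::] = 0.
Proof. by rewrite /vec big_nil. Qed.

Definition Kc (z : H) := forall e, 0 < e -> exists s, nrm (z - vec s) < e.

Lemma Kc_vec s : Kc (vec s).
Proof. by move=> e he; exists s; rewrite subrr nrm0. Qed.
Lemma Kc_closed z : (forall e, 0 < e -> exists z', Kc z' /\ nrm (z - z') < e) -> Kc z.
Proof.
move=> h e he.
have he2 : 0 < e / 2 by rewrite divr_gt0.
have [z' [hz' h1]] := h _ he2.
have [s hs] := hz' _ he2.
exists s; apply: le_lt_trans (nrm_tri z z' (vec s)) _; lra.
Qed.
Lemma Kc_lin a x y : Kc x -> Kc y -> Kc (a *: x + y).
Proof.
move=> hx hy e he.
have hc : 0 < e / (2 * (nc a + 1)).
  by rewrite divr_gt0 // mulr_gt0 // ltr_wpDl ?nc_ge0 ?ltr01.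
have he2 : 0 < e / 2 by rewrite divr_gt0.
have [s hs] := hx _ hc.
have [t ht] := hy _ he2.
exists (scl a s ++ t); rewrite vecD vecZ.
have -> : a *: x + y - (a *: vec s + vec t) = a *: (x - vec s) + (y - vec t).
  by rewrite scalerBr opprD addrACA.
apply: le_lt_trans (nrmD _ _) _; rewrite nrmZ.
have h1 : nc a * nrm (x - vec s) <= nc a * (e / (2 * (nc a + 1))).
  by apply: ler_wpM2l; rewrite ?nc_ge0 // ltW.
have h2 : nc a * (e / (2 * (nc a + 1))) <= e / 2.
  rewrite mulrA ler_pdivrMr ?mulr_gt0 ?ltr_wpDl ?nc_ge0 ?ltr01 //.
  have -> : e / 2 * (2 * (nc a + 1)) = e * nc a + e by field.
  lra.
lra.
Qed.
Lemma Kc0 : Kc 0.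
Proof. by rewrite -vec0; exact: Kc_vec. Qed.
Lemma Kc_sub x y : Kc x -> Kc y -> Kc (x - y).
Proof. by move=> hx hy; rewrite addrC -scaleN1r; apply: Kc_lin. Qed.

Lemma perp_Kc k z : Kc k -> (forall s, ip (vec s) z = 0) -> ip k z = 0.
Proof.
move=> hk hz; apply: nc_eq0; apply/eqP; rewrite eq_le nc_ge0 andbT.
apply: (@eps_le _ _ (nrm z)) => e he.
have [s hs] := hk _ he.
have -> : ip k z = ip (k - vec s) z by rewrite ipBl hz subr0.
apply: le_trans (ip_CS _ _) _.
by apply: ler_wpM2r; rewrite ?nrm_ge0 // ltW.
Qed.
Lemma Kc_perp0 z : Kc z -> (forall s, ip (vec s) z = 0) -> z = 0.
Proof. by move=> hk hz; apply: ipd; apply: perp_Kc. Qed.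

Lemma Wpsi_Kc zeta : Kc (W zeta psi).
Proof.
move=> e he.
have [del hdel hc] := Wcont psi zeta he.
have [eta [hDe hcl]] := hD zeta hdel.
exists [:: (1, exist _ eta hDe)]; rewrite vec1 nrmB; apply: hc.
by move=> k; rewrite distrC; apply: hcl.
Qed.
Lemma W_vec_Kc xi s : Kc (W xi (vec s)).
Proof.
elim: s => [|p s IH]; first by rewrite vec0 W0; exact: Kc0.
rewrite /vec big_cons -/(vec s) WD WZ Wmul scalerA.
by apply: Kc_lin => //; exact: Wpsi_Kc.
Qed.
Lemma W_Kc xi z : Kc z -> Kc (W xi z).
Proof.
move=> hz; apply: Kc_closed => e he.
have [s hs] := hz e he.
exists (W xi (vec s)); split; first exact: W_vec_Kc.
by rewrite -WB nrmW.
Qed.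

Lemma proj_ex x : exists y, Kc y /\ forall s, ip (vec s) (x - y) = 0.
Proof.
have lB : forall s, nc (ip (vec s) x) <= nrm x * nrm (vec s).
  by move=> s; rewrite mulrC; apply: ip_CS.
have lD : forall s t, ip (vec (s ++ t)) x = ip (vec s) x + ip (vec t) x.
  by move=> s t; rewrite vecD ipDl.
have lZ : forall c s, ip (vec (scl c s)) x = c^* * ip (vec s) x.
  by move=> c s; rewrite vecZ ipZl.
have [y [hy1 hy2]] := dirichlet ipl ipc ipp ipcomp [::] vecD vecZ lD lZ lB.
by exists y; split => // s; rewrite ipBr hy2 subrr.
Qed.
Definition P x := proj1_sig (cid (proj_ex x)).
Lemma P_Kc x : Kc (P x). Proof. exact: (proj1 (proj2_sig (cid (proj_ex x)))). Qed.
Lemma P_perp x s : ip (vec s) (x - P x) = 0.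
Proof. exact: (proj2 (proj2_sig (cid (proj_ex x)))). Qed.
Lemma P_uniq x y : Kc y -> (forall s, ip (vec s) (x - y) = 0) -> y = P x.
Proof.
move=> hy hp; apply/eqP; rewrite -subr_eq0; apply/eqP; apply: Kc_perp0.
  by apply: Kc_sub => //; exact: P_Kc.
move=> s; have h1 := hp s; have h2 := P_perp x s.
rewrite ipBr in h1; rewrite ipBr in h2; rewrite ipBr.
have e1 := subr0_eq h1; have e2 := subr0_eq h2.
by rewrite -e1 -e2 subrr.
Qed.
Lemma P_lin a x y : P (a *: x + y) = a *: P x + P y.
Proof.
apply: esym; apply: P_uniq; first by apply: Kc_lin; exact: P_Kc.
move=> s.
have -> : a *: x + y - (a *: P x + P y) = a *: (x - P x) + (y - P y).
  by rewrite scalerBr opprD addrACA.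
by rewrite ipl !P_perp mulr0 addr0.
Qed.
Lemma P_nrm x : nrm (P x) <= nrm x.
Proof.
have h : ip (P x) (x - P x) = 0 by apply: perp_Kc; [exact: P_Kc | exact: P_perp].
rewrite ipBr in h; have e := subr0_eq h.
have h2 : nrm (P x) ^+ 2 <= nrm (P x) * nrm x.
  rewrite nrm2 -e; apply: le_trans (Re_le_nc' _) _; exact: ip_CS.
have := nrm_ge0 (P x); have := nrm_ge0 x; nra.
Qed.
Lemma P_W xi x : P (W xi x) = W xi (P x).
Proof.
apply: esym; apply: P_uniq; first by apply: W_Kc; exact: P_Kc.
move=> s; rewrite -WB W_adj; apply: perp_Kc; first exact: W_vec_Kc.
exact: P_perp.
Qed.
Lemma P_bounded : bounded_op ip P.
Proof.
split; first by move=> a x y; exact: P_lin.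
by exists 1 => x; rewrite mul1r; exact: P_nrm.
Qed.

Lemma dense x : Kc x.
Proof.
apply: Kc_closed => e he.
have [T [[_ hT] hTe]] := hcyc x he.
have hpsi_K : Kc psi by rewrite -(W0id psi); exact: Wpsi_Kc.
have hPpsi : P psi = psi.
  by apply: esym; apply: P_uniq => // s; rewrite subrr ip0r.
exists (T psi); split; last by rewrite nrmB.
have := hT P P_bounded P_W psi; rewrite hPpsi => ->.
exact: P_Kc.
Qed.

Lemma perp0 z : (forall s, ip (vec s) z = 0) -> z = 0.
Proof. by apply: Kc_perp0; exact: dense. Qed.

Lemma bnd_dense z K : 0 <= K -> (forall s, nc (ip (vec s) z) <= K * nrm (vec s)) -> nrm z <= K.
Proof.
move=> hK hb.
have key : nrm z ^+ 2 <= K * nrm z.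
  apply: (@eps_le' _ _ _ (nrm z + K)) => e he.
  have [s hs] := dense z he.
  have e1 : ip z z = ip (z - vec s) z + ip (vec s) z by rewrite ipBl subrK.
  have h1 : Rc (ip (z - vec s) z) <= e * nrm z.
    apply: le_trans (Re_le_nc' _) _; apply: le_trans (ip_CS _ _) _.
    by apply: ler_wpM2r; rewrite ?nrm_ge0 // ltW.
  have h2 : Rc (ip (vec s) z) <= K * nrm (vec s).
    exact: le_trans (Re_le_nc' _) (hb s).
  have h3 : nrm (vec s) <= nrm z + e.
    have := nrm_ge_diff ipl ipc ipp (vec s) z.
    by rewrite nrmB => h; apply: le_trans h _; rewrite lerD2l ltW.
  have h4 : K * nrm (vec s) <= K * (nrm z + e) by apply: ler_wpM2l.
  rewrite nrm2 e1 ReD.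
  have := nrm_ge0 z; nra.
have := nrm_ge0 z; nra.
Qed.

Definition Qk (k : 'rV[R]_d -> 'rV[R]_d -> C) (s t : L) : C :=
  \sum_(p <- s) \sum_(q <- t) (p.1)^* * q.1 * k (sval p.2) (sval q.2).

Lemma QDl k s t u : Qk k (s ++ t) u = Qk k s u + Qk k t u.
Proof. by rewrite /Qk big_cat. Qed.
Lemma QDr k s t u : Qk k s (t ++ u) = Qk k s t + Qk k s u.
Proof. by rewrite /Qk -big_split; apply: eq_bigr => p _; rewrite big_cat. Qed.
Lemma QZl k c s t : Qk k (scl c s) t = c^* * Qk k s t.
Proof.
rewrite /Qk /scl big_map mulr_sumr; apply: eq_bigr => p _.
rewrite mulr_sumr; apply: eq_bigr => q _ /=.
by rewrite rmorphM -!mulrA.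
Qed.
Lemma QZr k c s t : Qk k s (scl c t) = c * Qk k s t.
Proof.
rewrite /Qk /scl mulr_sumr; apply: eq_bigr => p _.
rewrite big_map mulr_sumr; apply: eq_bigr => q _ /=.
by rewrite mulrCA !mulrA.
Qed.
Lemma QB k1 k2 s t : Qk (fun a b => k1 a b - k2 a b) s t = Qk k1 s t - Qk k2 s t.
Proof.
rewrite /Qk -sumrB; apply: eq_bigr => p _.
by rewrite -sumrB; apply: eq_bigr => q _; rewrite mulrBr.
Qed.
Lemma QI s t : Qk (fun a b => ip (W a psi) (W b psi)) s t = ip (vec s) (vec t).
Proof.
rewrite /Qk /vec ip_suml; apply: eq_bigr => p _.
rewrite ip_sumr; apply: eq_bigr => q _.
by rewrite ipZl ipZr mulrA.
Qed.

Lemma Qpos k s : psd_kernel D k -> 0 <= Qk k s s.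
Proof.
move=> hk.
case: s => [|p0 s']; first by rewrite /Qk big_nil.
set s := p0 :: s'.
pose r := size s.
pose xs := fun i : 'I_r => sval (nth p0 s i).2.
have hxs : forall i, D (xs i) by move=> i; exact: (proj2_sig (nth p0 s i).2).
pose c := \col_(i < r) (nth p0 s i).1.
have := hk r xs hxs c.
have -> : ((map_mx Num.conj c)^T *m (\matrix_(i, j) k (xs i) (xs j)) *m c) 0 0 = Qk k s s.
  rewrite /Qk (big_nth p0) big_mkord.
  rewrite mxE; apply: esym.
  under eq_bigr => i _ do rewrite (big_nth p0) big_mkord.
  under [RHS]eq_bigr => j _ do rewrite mxE big_distrl /=.
  rewrite exchange_big; apply: eq_bigr => i _; apply: eq_bigr => j _.
  by rewrite !mxE /xs /= mulrAC.
done.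
Qed.

Section Lin.
Variable f : H -> H.
Hypothesis hf : linear_op f.
Lemma loD x y : f (x + y) = f x + f y.
Proof. by have := hf 1 x y; rewrite !scale1r. Qed.
Lemma lo0 : f 0 = 0.
Proof.
have := loD 0 0; rewrite addr0 => /(congr1 (fun z => z - f 0)).
by rewrite subrr addrK.
Qed.
Lemma loZ a x : f (a *: x) = a *: f x.
Proof. by have := hf a x 0; rewrite !addr0 lo0 addr0. Qed.
Lemma loB x y : f (x - y) = f x - f y.
Proof. by rewrite loD -scaleN1r loZ scaleN1r. Qed.
Lemma lo_vec t : f (vec t) = \sum_(q <- t) q.1 *: f (W (sval q.2) psi).
Proof.
rewrite /vec; elim: t => [|q t IH]; first by rewrite !big_nil lo0.
by rewrite !big_cons loD loZ IH.
Qed.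
End Lin.

Lemma c_closed (z : C) : (forall e, 0 < e -> exists w, nc (z - w) < e /\ 0 <= w) -> 0 <= z.
Proof.
move=> h; rewrite le0c; apply/andP; split.
  rewrite -normr_le0; apply/(@eps_le _ _ 1) => e he.
  have [w [h1 h2]] := h e he.
  move: h2; rewrite le0c => /andP[/eqP hw _].
  have := Im_le_nc (z - w); rewrite ImB hw subr0 => h3; lra.
rewrite -oppr_le0; apply/(@eps_le _ _ 1) => e he.
have [w [h1 h2]] := h e he.
move: h2; rewrite le0c => /andP[_ hw].
have := Re_le_nc (z - w); rewrite ReB => h3.
have h5 := ler_norm (- (Rc z - Rc w)); rewrite normrN in h5.
lra.
Qed.

Lemma approx_pos (F : H -> C) :
  (forall x v, nc (F x - F v) <= 2 * nrm (x - v) * (nrm x + nrm v)) ->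
  (forall s, 0 <= F (vec s)) -> forall x, 0 <= F x.
Proof.
move=> hF hv x; apply: c_closed => e he.
have hnx := nrm_ge0 x.
have hden : 0 < 4 * nrm x + 3 + e by lra.
set del := e / (4 * nrm x + 3 + e).
have hdel : 0 < del by rewrite divr_gt0.
have hdel1 : del * (4 * nrm x + 3 + e) = e by rewrite /del mulfVK // gt_eqF.
have [s hs] := dense x hdel.
exists (F (vec s)); split; last exact: hv.
apply: le_lt_trans (hF _ _) _.
have hv1 : nrm (vec s) <= nrm x + nrm (x - vec s).
  by have := nrm_ge_diff ipl ipc ipp (vec s) x; rewrite nrmB.
have hn := nrm_ge0 (x - vec s).
have hdl : del < 1.
  rewrite /del ltr_pdivrMr // mul1r; lra.
nra.
Qed.

Variable phi : 'rV[R]_d -> 'rV[R]_d -> C.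
Hypothesis hphi : psd_kernel D phi.
Hypothesis hphi2 : psd_kernel D (fun xi eta => phiA ip W psi id xi eta - phi xi eta).

Local Notation Q := (Qk phi).
Lemma Qp s : 0 <= Q s s. Proof. exact: Qpos. Qed.
Lemma Q_real s : Ic (Q s s) = 0.
Proof. by have := Qp s; rewrite le0c => /andP[/eqP]. Qed.
Lemma Q_le s : Q s s <= ip (vec s) (vec s).
Proof.
have h := Qpos s hphi2.
have e : Qk (fun xi eta => phiA ip W psi id xi eta - phi xi eta) s s =
  Qk (fun a b => ip (W a psi) (W b psi)) s s - Qk phi s s := QB _ _ s s.
by rewrite e QI subr_ge0 in h.
Qed.
Lemma Q_herm s t : Q t s = (Q s t)^*.
Proof. exact: (q_herm (QDl phi) (QDr phi) (QZl phi) (QZr phi) Qp). Qed.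
Lemma Q_CS s t : nc (Q s t) <= nrm (vec s) * nrm (vec t).
Proof.
have h := q_CS (QDl phi) (QDr phi) (QZl phi) (QZr phi) Qp s t.
have hs : Rc (Q s s) <= nrm (vec s) ^+ 2.
  by have := Q_le s; rewrite lec' nrm2 => /andP[_].
have ht : Rc (Q t t) <= nrm (vec t) ^+ 2.
  by have := Q_le t; rewrite lec' nrm2 => /andP[_].
have hs0 : 0 <= Rc (Q s s) by have := Qp s; rewrite le0c => /andP[].
have ht0 : 0 <= Rc (Q t t) by have := Qp t; rewrite le0c => /andP[].
apply: sqrt_le; first by rewrite mulr_ge0 ?nrm_ge0.
apply: le_trans h _; rewrite exprMn; apply: ler_pM => //.
Qed.

Lemma y_ex s : exists y, Kc y /\ forall u, ip (vec u) y = Q u s.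
Proof.
have lB : forall u, nc (Q u s) <= nrm (vec s) * nrm (vec u).
  by move=> u; rewrite mulrC; apply: Q_CS.
have lD : forall u v, Q (u ++ v) s = Q u s + Q v s by move=> u v; exact: QDl.
have lZ : forall c u, Q (scl c u) s = c^* * Q u s by move=> c u; exact: QZl.
exact: (dirichlet ipl ipc ipp ipcomp [::] vecD vecZ lD lZ lB).
Qed.
Definition Y s := proj1_sig (cid (y_ex s)).
Lemma YP u s : ip (vec u) (Y s) = Q u s.
Proof. exact: (proj2 (proj2_sig (cid (y_ex s)))). Qed.
Lemma Y_nrm s : nrm (Y s) <= nrm (vec s).
Proof. apply: bnd_dense; first exact: nrm_ge0. by move=> u; rewrite YP mulrC; apply: Q_CS. Qed.
Lemma YD s t : Y (s ++ t) = Y s + Y t.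
Proof.
apply/eqP; rewrite -subr_eq0; apply/eqP; apply: perp0 => u.
by rewrite ipBr ipDr !YP QDr subrr.
Qed.
Lemma YZ c s : Y (scl c s) = c *: Y s.
Proof.
apply/eqP; rewrite -subr_eq0; apply/eqP; apply: perp0 => u.
by rewrite ipBr ipZr !YP QZr subrr.
Qed.

Lemma A_ex x : exists z, Kc z /\ forall s, ip (vec s) z = ip (Y s) x.
Proof.
have lB : forall s, nc (ip (Y s) x) <= nrm x * nrm (vec s).
  move=> s; apply: le_trans (ip_CS _ _) _; rewrite mulrC.
  by apply: ler_wpM2l; [exact: nrm_ge0| exact: Y_nrm].
have lD : forall s t, ip (Y (s ++ t)) x = ip (Y s) x + ip (Y t) x.
  by move=> s t; rewrite YD ipDl.
have lZ : forall c s, ip (Y (scl c s)) x = c^* * ip (Y s) x.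
  by move=> c s; rewrite YZ ipZl.
exact: (dirichlet ipl ipc ipp ipcomp [::] vecD vecZ lD lZ lB).
Qed.
Definition Aop x := proj1_sig (cid (A_ex x)).
Lemma AP s x : ip (vec s) (Aop x) = ip (Y s) x.
Proof. exact: (proj2 (proj2_sig (cid (A_ex x)))). Qed.

Lemma A_lin : linear_op Aop.
Proof.
move=> a x y; apply/eqP; rewrite -subr_eq0; apply/eqP; apply: perp0 => s.
by rewrite ipBr ipDr ipZr !AP ipl subrr.
Qed.
Lemma A_nrm x : nrm (Aop x) <= nrm x.
Proof.
apply: bnd_dense; first exact: nrm_ge0.
move=> s; rewrite AP; apply: le_trans (ip_CS _ _) _; rewrite mulrC.
by apply: ler_wpM2l; [exact: nrm_ge0| exact: Y_nrm].
Qed.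
Lemma A_bounded : bounded_op ip Aop.
Proof. by split; [exact: A_lin | exists 1 => x; rewrite mul1r; exact: A_nrm]. Qed.

Lemma Q11 xi eta (hx : D xi) (he : D eta) :
  Q [:: (1, exist _ xi hx)] [:: (1, exist _ eta he)] = phi xi eta.
Proof. by rewrite /Qk !big_seq1 /= rmorph1 !mul1r. Qed.

Lemma A_phi xi eta : D xi -> D eta -> phi xi eta = phiA ip W psi Aop xi eta.
Proof.
move=> hx he; rewrite /phiA -(vec1 hx) -(vec1 he) AP ipc YP.
by rewrite -Q_herm Q11.
Qed.

Lemma A_vec s : ip (vec s) (Aop (vec s)) = Q s s.
Proof.
rewrite AP ipc YP; apply: ceq; rewrite ?ReJ ?ImJ // Q_real oppr0 //.
Qed.

Lemma F_bound x v : nc (ip x (Aop x) - ip v (Aop v)) <= nrm (x - v) * (nrm x + nrm v).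
Proof.
have e : ip x (Aop x) - ip v (Aop v) = ip (x - v) (Aop x) + ip v (Aop (x - v)).
  by rewrite (loB A_lin) ipBl ipBr addrA subrK.
rewrite e; apply: le_trans (ncD _ _) _.
have h1 : nc (ip (x - v) (Aop x)) <= nrm (x - v) * nrm x.
  apply: le_trans (ip_CS _ _) _; apply: ler_wpM2l; [exact: nrm_ge0| exact: A_nrm].
have h2 : nc (ip v (Aop (x - v))) <= nrm v * nrm (x - v).
  apply: le_trans (ip_CS _ _) _; apply: ler_wpM2l; [exact: nrm_ge0| exact: A_nrm].
have := nrm_ge0 x; have := nrm_ge0 v; have := nrm_ge0 (x - v); nra.
Qed.
Lemma F_bound2 x v : nc (ip x (Aop x) - ip v (Aop v)) <= 2 * nrm (x - v) * (nrm x + nrm v).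
Proof.
have := F_bound x v; have := nrm_ge0 x; have := nrm_ge0 v; have := nrm_ge0 (x - v); nra.
Qed.

Lemma G_bound x v : nc ((ip x x - ip x (Aop x)) - (ip v v - ip v (Aop v)))
  <= 2 * nrm (x - v) * (nrm x + nrm v).
Proof.
have e : (ip x x - ip x (Aop x)) - (ip v v - ip v (Aop v)) =
   (ip (x - v) x + ip v (x - v)) - (ip x (Aop x) - ip v (Aop v)).
  rewrite ipBl ipBr; ring.
rewrite e; apply: le_trans (ncD _ _) _; rewrite ncN.
have h0 := F_bound x v.
have h3 : nc (ip (x - v) x + ip v (x - v)) <= nrm (x - v) * nrm x + nrm v * nrm (x - v).
  apply: le_trans (ncD _ _) _; apply: lerD; exact: ip_CS.
move: h0; rewrite /= => h0.
have := nrm_ge0 x; have := nrm_ge0 v; have := nrm_ge0 (x - v).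
move: h0 h3; set a := nc _; set b := nc _; nra.
Qed.

Lemma A_between : op_between_0_I ip Aop.
Proof.
move=> x; split.
  apply: (approx_pos (F := fun x => ip x (Aop x))) => //; first exact: F_bound2.
  by move=> s; rewrite A_vec; exact: Qp.
rewrite -subr_ge0.
apply: (approx_pos (F := fun x => ip x x - ip x (Aop x))) => //; first exact: G_bound.
by move=> s; rewrite A_vec subr_ge0; exact: Q_le.
Qed.

Lemma lin_Q f : linear_op f ->
  (forall xi eta, D xi -> D eta -> phi xi eta = ip (W xi psi) (f (W eta psi))) ->
  forall s t, ip (vec s) (f (vec t)) = Q s t.
Proof.
move=> hf hf' s t.
rewrite (lo_vec hf) /vec ip_suml /Qk; apply: eq_bigr => p _.
rewrite ip_sumr; apply: eq_bigr => q _.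
rewrite ipZl ipZr -hf'; last exact: (proj2_sig q.2).
  by rewrite mulrA.
exact: (proj2_sig p.2).
Qed.

Lemma B_uniq B : bounded_op ip B ->
  (forall xi eta, D xi -> D eta -> phi xi eta = phiA ip W psi B xi eta) -> B = Aop.
Proof.
move=> [Blin [M hM]] hB.
have QB' := lin_Q Blin hB.
have QA' := lin_Q A_lin A_phi.
apply: funext => x.
apply/eqP; rewrite -subr_eq0; apply/eqP; apply: perp0 => s.
apply: nc_eq0; apply/eqP; rewrite eq_le nc_ge0 andbT.
apply: (@eps_le _ _ (nrm (vec s) * (`|M| + 1))) => e he.
have [t ht] := dense x he.
set z := x - vec t.
have eB : B x = B z + B (vec t) by rewrite -(loD Blin) subrK.
have eA : Aop x = Aop z + Aop (vec t) by rewrite -(loD A_lin) subrK.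
have e1 : ip (vec s) (B x - Aop x) = ip (vec s) (B z - Aop z).
  rewrite !ipBr eB eA !ipDr QB' QA'; ring.
rewrite e1; apply: le_trans (ip_CS _ _) _.
have h1 : nrm (B z - Aop z) <= (`|M| + 1) * nrm z.
  apply: le_trans (nrmD _ _) _; rewrite nrmN.
  have h3 : M * nrm z <= `|M| * nrm z by apply: ler_wpM2r; [exact: nrm_ge0| exact: ler_norm].
  have := hM z; have := A_nrm z; lra.
have h2 : nrm z <= e by rewrite ltW.
apply: le_trans (ler_wpM2l (nrm_ge0 _) h1) _.
rewrite mulrA [e * _]mulrC; apply: ler_wpM2l => //.
by rewrite mulr_ge0 ?nrm_ge0 // addr_ge0.
Qed.

Lemma f_cont xi0 eta0 (e : R) : 0 < e -> exists2 delta : R, 0 < delta &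
  forall xi eta, rv_close xi xi0 delta -> rv_close eta eta0 delta ->
    `|phiA ip W psi Aop xi eta - phiA ip W psi Aop xi0 eta0| < (e%:C)%C.
Proof.
move=> he.
have he2 : 0 < e / 2 by rewrite divr_gt0.
have [d1 hd1 hc1] := Wcont psi xi0 he2.
have [d2 hd2 hc2] := Wcont psi eta0 he2.
exists (Num.min d1 d2); first by rewrite lt_min hd1 hd2.
move=> xi eta hx hy.
have hx' : rv_close xi xi0 d1 by move=> k; have := hx k; rewrite lt_min => /andP[].
have hy' : rv_close eta eta0 d2 by move=> k; have := hy k; rewrite lt_min => /andP[].
have k1 := hc1 _ hx'; have k2 := hc2 _ hy'.
rewrite normC' ltcR /phiA.
have e1 : ip (W xi psi) (Aop (W eta psi)) - ip (W xi0 psi) (Aop (W eta0 psi)) =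
  ip (W xi psi - W xi0 psi) (Aop (W eta psi)) + ip (W xi0 psi) (Aop (W eta psi - W eta0 psi)).
  rewrite (loB A_lin) ipBl ipBr; ring.
rewrite e1; apply: le_lt_trans (ncD _ _) _.
have h1 : nc (ip (W xi psi - W xi0 psi) (Aop (W eta psi))) <= nrm (W xi psi - W xi0 psi).
  apply: le_trans (ip_CS _ _) _.
  have := A_nrm (W eta psi); rewrite nrmW hpsi => h.
  by rewrite -[X in _ <= X]mulr1; apply: ler_wpM2l => //; exact: nrm_ge0.
have h2 : nc (ip (W xi0 psi) (Aop (W eta psi - W eta0 psi))) <= nrm (W eta psi - W eta0 psi).
  apply: le_trans (ip_CS _ _) _; rewrite nrmW hpsi mul1r; exact: A_nrm.
lra.
Qed.

Lemma main_result :
  (exists A : H -> H,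
     [/\ bounded_op ip A, op_between_0_I ip A,
         (forall xi eta, D xi -> D eta -> phi xi eta = phiA ip W psi A xi eta) &
         (forall B : H -> H, bounded_op ip B -> op_between_0_I ip B ->
            (forall xi eta, D xi -> D eta -> phi xi eta = phiA ip W psi B xi eta) ->
            B = A)])
  /\
  (exists f : 'rV[R]_d -> 'rV[R]_d -> R[i],
     (forall xi eta, D xi -> D eta -> f xi eta = phi xi eta) /\
     (forall xi0 eta0 (e : R), 0 < e -> exists2 delta : R, 0 < delta &
        forall xi eta, rv_close xi xi0 delta -> rv_close eta eta0 delta ->
          `|f xi eta - f xi0 eta0| < (e%:C)%C)).
Proof.
split.
  exists Aop; split; [exact: A_bounded | exact: A_between | exact: A_phi |].
  by move=> B hB _ hBp; apply: B_uniq.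
exists (phiA ip W psi Aop); split; last exact: f_cont.
by move=> xi eta hx he; rewrite -A_phi.
Qed.
End Main.

Theorem lemma2 (R : realType) (d : nat) (S : 'M[R]_d)
  (H : lmodType R[i]) (ip : H -> H -> R[i]) (W : 'rV[R]_d -> H -> H) (psi : H)
  (D : 'rV[R]_d -> Prop) (phi : 'rV[R]_d -> 'rV[R]_d -> R[i]) :
  S^T = - S ->
  is_hilbert ip ->
  ccr_rep ip S W ->
  hnorm ip psi = 1 ->
  cyclic_vec ip W psi ->
  dense_rv D ->
  psd_kernel D phi ->
  psd_kernel D (fun xi eta => phiA ip W psi id xi eta - phi xi eta) ->
  (exists A : H -> H,
     [/\ bounded_op ip A, op_between_0_I ip A,
         (forall xi eta, D xi -> D eta -> phi xi eta = phiA ip W psi A xi eta) &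
         (forall B : H -> H, bounded_op ip B -> op_between_0_I ip B ->
            (forall xi eta, D xi -> D eta -> phi xi eta = phiA ip W psi B xi eta) ->
            B = A)])
  /\
  (exists f : 'rV[R]_d -> 'rV[R]_d -> R[i],
     (forall xi eta, D xi -> D eta -> f xi eta = phi xi eta) /\
     (forall xi0 eta0 (e : R), 0 < e -> exists2 delta : R, 0 < delta &
        forall xi eta, rv_close xi xi0 delta -> rv_close eta eta0 delta ->
          `|f xi eta - f xi0 eta0| < (e%:C)%C)).
Proof.
move=> hS [ipl ipc ipp ipd ipcomp] [Wlin Wip Wsurj Wmul Wcont] hpsi hcyc hD hphi hphi2.
exact: (main_result hS ipl ipc ipp ipd ipcomp Wlin Wip Wsurj Wmul Wcont hpsi hcyc hD hphi hphi2).
Qed.
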